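(* Let $V$ be a finite-dimensional real vector space, $\Gamma$ a semigroup with identity $e$, and $\rho:\Gamma\to\mathrm{End}(V)$ an expansive endomorphism action with $\rho(e)=\mathrm{Id}$. Then there exists a finitely generated subsemigroup $\Gamma_0\subset\Gamma$ (containing $e$) whose action on $V$ (restriction of $\rho$) is expansive.
   Context: The action is expansive if there is a neighborhood $U$ of $0$ in $V$ with $\bigcap_{\gamma}\rho(\gamma)^{-1}(U)=\{0\}$; equivalently, every non-zero vector has an unbounded orbit. *)

(* Defs.v *)
From HB Require Import structures.
From mathcomp Require Import all_boot all_order all_algebra.
From mathcomp Require Import all_classical all_reals all_analysis.
Set Implicit Arguments. Unset Strict Implicit. Unset Printing Implicit Defensive.
Import Order.TTheory GRing.Theory Num.Theory.
Import numFieldNormedType.Exports.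
Local Open Scope classical_set_scope.
Local Open Scope ring_scope.

Inductive generated (G : Type) (mul : G -> G -> G) (S : set G) : G -> Prop :=
  | gen_base : forall x, S x -> generated mul S x
  | gen_mul : forall x y, generated mul S x -> generated mul S y ->
                          generated mul S (mul x y).

(* V = R^n as column vectors, End(V) = n x n matrices acting by M *m v. *)
Definition expansive (R : realType) (n : nat) (G : Type)
  (rho : G -> 'M[R]_n) (I : set G) : Prop :=
  exists U : set 'cV[R]_n,
    nbhs (0 : 'cV[R]_n) U /\
    \bigcap_(g in I) [set v : 'cV[R]_n | U (rho g *m v)] = [set 0].

(* Main.v *)
Require Import Defs.
From HB Require Import structures.
From mathcomp Require Import all_boot all_order all_algebra.
From mathcomp Require Import all_classical all_reals all_analysis.
Import Order.TTheory GRing.Theory Num.Theory.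
Import numFieldNormedType.Exports.
Local Open Scope classical_set_scope.
Local Open Scope ring_scope.

From mathcomp Require Import lra.

Section Aux.
Variable R : realType.

Lemma entry_le m n (x : 'M[R]_(m, n)) i j : `|x i j| <= `|x|.
Proof.
rewrite [leRHS]/Num.Def.normr /= mx_normrE.
exact: (le_bigmax _ (fun ij : 'I_m * 'I_n => `|x ij.1 ij.2|) (i, j)).
Qed.

Lemma norm_le m n (x : 'M[R]_(m, n)) c :
  0 <= c -> (forall i j, `|x i j| <= c) -> `|x| <= c.
Proof.
move=> c0 H; rewrite [leLHS]/Num.Def.normr /= mx_normrE.
apply/bigmax_leP; split => // ij _; exact: H.
Qed.

Lemma trnorm m n (x : 'M[R]_(m, n)) : `|x^T| = `|x|.
Proof.
apply/eqP; rewrite eq_le; apply/andP; split.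
  by apply: norm_le => // i j; rewrite mxE entry_le.
apply: norm_le => // i j; have -> : x i j = x^T j i by rewrite mxE.
exact: entry_le.
Qed.

Lemma mul_bound n (A : 'M[R]_n) (v : 'cV[R]_n) :
  `|A *m v| <= n%:R * `|A| * `|v|.
Proof.
apply: norm_le; first by rewrite !mulr_ge0.
move=> i j; rewrite mxE.
apply: le_trans (ler_norm_sum _ _ _) _.
apply: le_trans (_ : \sum_(k < n) `|A| * `|v| <= _).
  apply: ler_sum => k _; rewrite normrM; apply: ler_pM => //; exact: entry_le.
by rewrite sumr_const card_ord -mulrA mulr_natl.
Qed.

Lemma nbhs_gt n (A : 'M[R]_n) (u : 'rV[R]_n) : 2 < `|A *m u^T| ->
   nbhs u [set u : 'rV[R]_n | 2 < `|A *m u^T|].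
Proof.
move=> hu; apply/(@nbhs_ballP R (matrix R 1 n)).
set C := n%:R * `|A| + 1.
have C0 : 0 < C by rewrite /C ltr_wpDl // mulr_ge0.
exists ((`|A *m u^T| - 2) / C); first by rewrite /= divr_gt0 // subr_gt0.
move=> u'; rewrite -ball_normE /= => hd.
have h1 : `|A *m (u - u')^T| <= n%:R * `|A| * `|u - u'|.
  by rewrite -(trnorm _ _ (u - u')) mul_bound.
have h2 : `|A *m u^T| <= `|A *m u'^T| + `|A *m (u - u')^T|.
  rewrite linearB /= mulmxBr.
  by have := ler_normD (A *m u'^T) (A *m u^T - A *m u'^T); rewrite [X in `|X|]addrC subrK.
have h3 : C * `|u - u'| < `|A *m u^T| - 2 by rewrite mulrC -ltr_pdivlMr.
have h4 : 0 <= `|u - u'| by [].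
have h5 : n%:R * `|A| * `|u - u'| <= C * `|u - u'|.
  by rewrite /C mulrDl mul1r lerDl.
lra.
Qed.

Lemma open_gt n (A : 'M[R]_n) : open [set u : 'rV[R]_n | 2 < `|A *m u^T|].
Proof. rewrite openE => u hu; exact: nbhs_gt. Qed.
End Aux.

Theorem lemma3p1 (R : realType) (n : nat) (G : Type)
  (mul : G -> G -> G) (e : G)
  (mulA : associative mul) (mul1g : left_id e mul) (mulg1 : right_id e mul)
  (rho : G -> 'M[R]_n)
  (rhoM : forall a b, rho (mul a b) = rho a *m rho b)
  (rho1 : rho e = 1%:M)
  (hexp : expansive rho setT) :
  exists (k : nat) (g : 'I_k -> G),
    expansive rho (generated mul (range g `|` [set e])).

Proof.
move: hexp => [U [U0 hU]].
have [eps eps0 epsU] : exists2 eps : R, 0 < eps & forall v : 'cV[R]_n, `|v| < eps -> U v.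
  move/nbhs_ballP: U0 => [e1 e0 eU]; exists e1 => // v hv; apply: eU.
  by rewrite -ball_normE /= sub0r normrN.
have unb : forall v : 'cV[R]_n, v != 0 -> exists g, eps <= `|rho g *m v|.
  move=> v v0; apply: contrapT => H.
  have : (\bigcap_(g in setT) [set v | U (rho g *m v)]) v.
    move=> g _; apply: epsU; rewrite ltNge; apply/negP => hg; apply: H; by exists g.
  by rewrite hU => /= v0'; rewrite v0' eqxx in v0.
pose K := [set w : 'rV[R]_n | `|w| = 1].
have hg : forall w : 'rV[R]_n, exists g, K w -> 2 < `|rho g *m w^T|.
  move=> w; case: (pselect (K w)) => Kw; last by exists e.
  have e3 : 0 < eps / 3 by rewrite divr_gt0.
  have w0 : ((eps/3) *: w^T) != 0.
    apply/eqP => h; have := congr1 Num.Def.normr h.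
    rewrite normrZ trnorm Kw normr0 mulr1 gtr0_norm //; lra.
  have [g hg] := unb _ w0; exists g => _.
  move: hg; rewrite -scalemxAr normrZ gtr0_norm // => hg.
  have := normr_ge0 (rho g *m w^T); nra.
case: (choice hg) => gw hgw.
pose f w := [set u : 'rV[R]_n | 2 < `|rho (gw w) *m u^T|].
have Kc : compact K.
  apply: bounded_closed_compact.
    exists 1; split; first by rewrite num_real.
    by move=> M M1 w /= ->; exact: ltW.
  have -> : K = (fun w : 'rV[R]_n => `|w|) @^-1` [set x : R | x = 1] by [].
  apply: preimage_closed; last exact: closed_eq.
  by move=> x _; exact: norm_continuous.
have fo : forall w, K w -> open (f w) by move=> w _; exact: open_gt.
have cov : K `<=` cover K f by move=> w Kw; exists w => //; exact: hgw.
move: Kc; rewrite compact_cover => /(_ _ K f fo cov) [D' D'K Kcov].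
pose s : seq 'rV[R]_n := finmap.enum_fset D'.
pose g (i : 'I_(size s)) := gw (nth 0 s i).
have key : forall v : 'cV[R]_n, v != 0 -> exists i, 2 * `|v| < `|rho (g i) *m v|.
  move=> v v0.
  have nv : 0 < `|v^T| by rewrite normr_gt0 trmx_eq0.
  pose w := `|v^T|^-1 *: v^T.
  have Kw : K w by rewrite /K /= /w normrZ normfV normr_id mulVf // gt_eqF.
  have [w' w'D hw'] := Kcov _ Kw.
  have w's : w' \in s by exact: w'D.
  have hi : (index w' s < size s)%N by rewrite index_mem.
  exists (Ordinal hi).
  rewrite /g /= nth_index //.
  move: hw'; rewrite /f /= /w linearZ /= trmxK -scalemxAr normrZ normfV normr_id.
  rewrite trnorm in nv *; by rewrite ltr_pdivlMl // mulrC.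
pose S := range g `|` [set e].
have grow : forall (m : nat) (v : 'cV[R]_n), v != 0 ->
    exists h, generated mul S h /\ m.+1%:R * `|v| <= `|rho h *m v|.
  elim=> [|m IH] v v0.
    exists e; split; first by apply: gen_base; right.
    by rewrite rho1 mul1mx mul1r.
  have [h [Gh hh]] := IH v v0.
  have nv : 0 < `|v| by rewrite normr_gt0.
  have h1 : `|v| <= `|rho h *m v|.
    apply: le_trans hh; rewrite ler_peMl // ler1n //.
  have u0 : rho h *m v != 0 by rewrite -normr_gt0; exact: lt_le_trans h1.
  have [i hi] := key _ u0.
  exists (mul (g i) h); split.
    by apply: gen_mul => //; apply: gen_base; left; exists i.
  rewrite rhoM -mulmxA -addn1 natrD mulrDl mul1r.
  lra.
exists (size s), g, [set u : 'cV[R]_n | `|u| < eps]; split.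
  apply/nbhs_ballP; exists eps => // u.
  by rewrite -ball_normE /= sub0r normrN.
rewrite eqEsubset; split => v /=; last first.
  by move=> -> h _ /=; rewrite mulmx0 normr0.
move=> Hv; apply/eqP; apply: contrapT => /negP v0.
have nv : 0 < `|v| by rewrite normr_gt0.
have [h [Gh hh]] := grow (Num.Def.archi_bound (eps / `|v|)) v v0.
have := Hv h Gh; rewrite /= ltNge => /negP; apply.
apply: le_trans hh.
have hb := @archi_boundP R (eps / `|v|) (ltW (divr_gt0 eps0 nv)).
rewrite -ler_pdivrMr // ltW //; apply: lt_le_trans hb _.
by rewrite ler_nat.
Qed.
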